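(* Let $V$ be a Whittaker module of type $\eta$ over $R$ with cyclic Whittaker vector $w$. If $Z_V=(p(\Omega))$ with $p\neq0$ a monic polynomial of degree $n$, then $\{F^iH^jw : 0\le i\le n-1,\ j\in\mathbb{Z}_{\ge0}\}$ is a $\mathbb{C}$-basis of $V$. If $Z_V=0$, then $\{F^iH^jw : i,j\in\mathbb{Z}_{\ge0}\}$ is a $\mathbb{C}$-basis of $V$.
   Context: Let $f\in\mathbb{C}[H]$ be a polynomial. $R=R(f)$ is the associative $\mathbb{C}$-algebra generated by $E,F,H$ with relations $EF-FE=f(H)$, $HE-EH=E$, $HF-FH=-F$. Let $u\in\mathbb{C}[H]$ satisfy $f(H)=\tfrac12(u(H+1)-u(H))$ and $\Omega=2FE+u(H+1)$; the center $Z(R)$ is the polynomial ring $\mathbb{C}[\Omega]$. Let $R(E)=\mathbb{C}[E]$ and fix an algebra homomorphism $\eta:R(E)\to\mathbb{C}$ with $\eta(E)\neq0$. A vector $v$ of an $R$-module $V$ is a Whittaker vector of type $\eta$ if $Ev=\eta(E)v$; $V$ is a Whittaker module of type $\eta$ with cyclic Whittaker vector $w$ if $w$ is a Whittaker vector and $V=Rw$. $Z_V=\mathrm{Ann}_R(V)\cap Z(R)$. *)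

(* Defs.v *)
From HB Require Import structures.
From mathcomp Require Import all_boot all_order all_algebra.
From mathcomp Require Import complex Rstruct.
Set Implicit Arguments. Unset Strict Implicit. Unset Printing Implicit Defensive.
Import Order.TTheory GRing.Theory Num.Theory.
Local Open Scope ring_scope.

Notation CC := (complex Rdefinitions.R).

Section Defs.
Variable V : lmodType CC.

Definition poly_op (q : {poly CC}) (A : V -> V) (v : V) : V :=
  \sum_(i < size q) q`_i *: iter i A v.

(* V, equipped with the operators E F H, is a module over
   R(f) = C<E,F,H>/(EF-FE=f(H), HE-EH=E, HF-FH=-F). *)
Definition is_Rf_module (f : {poly CC}) (E F H : {linear V -> V}) : Prop :=
  [/\ forall v, E (F v) - F (E v) = poly_op f H v,
      forall v, H (E v) - E (H v) = E v &
      forall v, H (F v) - F (H v) = - F v].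

Definition Omega_op (u : {poly CC}) (E F H : {linear V -> V}) (v : V) : V :=
  2%:R *: F (E v) + poly_op (u \Po ('X + 1)) H v.

(* V = R w : the only subspace containing w and stable under E, F, H
   is V itself. *)
Definition cyclic_vector (E F H : {linear V -> V}) (w : V) : Prop :=
  forall S : V -> Prop,
    S w -> S 0 -> (forall x y, S x -> S y -> S (x + y)) ->
    (forall (c : CC) x, S x -> S (c *: x)) ->
    (forall x, S x -> S (E x)) -> (forall x, S x -> S (F x)) ->
    (forall x, S x -> S (H x)) ->
    forall v, S v.

Definition whittaker_module (E F H : {linear V -> V}) (eta : CC) (w : V) : Prop :=
  E w = eta *: w /\ cyclic_vector E F H w.

Definition is_basis_on (I : eqType) (P : pred I) (b : I -> V) : Prop :=
  (forall (s : seq I) (c : I -> CC),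
      uniq s -> all P s -> \sum_(i <- s) c i *: b i = 0 ->
      forall i, i \in s -> c i = 0) /\
  (forall v, exists (s : seq I) (c : I -> CC),
      all P s /\ v = \sum_(i <- s) c i *: b i).

(* The polynomial q in Omega lies in Z_V = Ann_R(V) ∩ Z(R) (Z(R) = C[Omega]). *)
Definition in_ZV (u : {poly CC}) (E F H : {linear V -> V}) (q : {poly CC}) : Prop :=
  forall v, poly_op q (Omega_op u E F H) v = 0.

End Defs.

(* Main.v *)
Require Import Defs.
From HB Require Import structures.
From mathcomp Require Import all_boot all_order all_algebra.
From mathcomp Require Import complex Rstruct.
From mathcomp Require Import ring.
Import Order.TTheory GRing.Theory Num.Theory.
Local Open Scope ring_scope.
Set Warnings "-notation-overridden,-ambiguous-paths,-deprecated".


Definition Dl (g : {poly CC}) := g \Po ('X - 1%:P) - g.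

Lemma size_XsubC1 : size ('X - 1%:P : {poly CC}) = 2.
Proof. exact: size_XsubC. Qed.

Lemma DlD p q : Dl (p + q) = Dl p + Dl q.
Proof. by rewrite /Dl comp_polyD opprD addrACA. Qed.

Lemma DlZ c p : Dl (c *: p) = c *: Dl p.
Proof. by rewrite /Dl comp_polyZ scalerBr. Qed.

Lemma size_Dl g : (size (Dl g) <= (size g).-1)%N.
Proof.
have [->|gn0] := eqVneq g 0; first by rewrite /Dl comp_poly0 subr0 size_poly0.
apply/leq_sizeP => j hj; rewrite /Dl coefB.
have hs := size_comp_poly2 g size_XsubC1.
move: hj; rewrite leq_eqVlt => /orP[/eqP hj|hj].
  have := @lead_coef_comp _ g ('X - 1%:P); rewrite size_XsubC1.
  move=> /(_ isT); rewrite lead_coefXsubC expr1n mulr1 /lead_coef hs -hj => ->.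
  by rewrite subrr.
rewrite !nth_default ?subrr // ?hs; apply: leq_trans hj; by rewrite leqSpred.
Qed.

Lemma coefXsub1 n : ((('X - 1%:P) ^+ n.+1 : {poly CC}))`_n = - n.+1%:R.
Proof.
elim: n => [|n IH]; first by rewrite expr1 coefB coefX coefC /= sub0r.
have hm : (('X - 1%:P) ^+ n.+1 : {poly CC}) \is monic by exact: (monic_exp n.+1 (monicXsubC 1)).
have hs : size (('X - 1%:P) ^+ n.+1 : {poly CC}) = n.+2 by rewrite size_exp_XsubC.
rewrite exprSr mulrBr polyC1 mulr1 coefB coefMX /= IH.
move/monicP: hm; rewrite /lead_coef hs /= => ->.
by rewrite -[n.+2]addn1 natrD opprD.
Qed.

Lemma sizeleS (p : {poly CC}) d : (size p <= d.+1)%N -> p`_d = 0 -> (size p <= d)%N.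
Proof.
move=> hs hd; apply/leq_sizeP => j; rewrite leq_eqVlt => /orP[/eqP <-//|hj].
by rewrite nth_default // (leq_trans hs hj).
Qed.

Lemma coefDl d (g : {poly CC}) : (size g <= d.+2)%N -> (Dl g)`_d = - d.+1%:R * g`_d.+1.
Proof.
move=> hs; set a := g`_d.+1.
have hg0 : (size (g - a *: 'X^(d.+1))%R <= d.+1)%N.
  apply: sizeleS.
    apply: leq_trans (size_polyD _ _) _; rewrite geq_max hs size_polyN.
    by apply: leq_trans (size_scale_leq _ _) _; rewrite size_polyXn.
  by rewrite coefB coefZ coefXn eqxx mulr1 subrr.
have -> : g = (g - a *: 'X^(d.+1)) + a *: 'X^(d.+1) by rewrite subrK.
rewrite DlD DlZ coefD coefZ.
rewrite (nth_default _ (leq_trans (size_Dl _) _)); last by move: hg0; case: (size _).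
rewrite add0r /Dl comp_Xn_poly coefB coefXsub1 coefXn (ltn_eqF (ltnSn d)) subr0 mulrC.
by [].
Qed.

Lemma iterDl d : exists2 cd : CC, cd != 0 &
  forall g : {poly CC}, (size g <= d.+1)%N -> iter d Dl g = (cd * g`_d)%:P.
Proof.
elim: d => [|d [cd cdn0 IH]].
  by exists 1 => [|g hg]; rewrite ?oner_eq0 //= mul1r -size1_polyC.
exists (cd * - d.+1%:R) => [|g hg].
  by rewrite mulf_neq0 // oppr_eq0 pnatr_eq0.
rewrite iterSr IH; first by rewrite coefDl // mulrA.
by apply: leq_trans (size_Dl _) _; move: hg; case: (size g).
Qed.
Section Gen.
Variable V : lmodType CC.
Implicit Types (A B T : V -> V) (p q r : {poly CC}) (v x y : V).

Definition lin T := forall (c : CC) x y, T (c *: x + y) = c *: T x + T y.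

Lemma lin0 T : lin T -> T 0 = 0.
Proof.
move=> h; have := h 1 0 0; rewrite scaler0 add0r scale1r.
by move/(congr1 (fun z => z - T 0)); rewrite subrr addrK => <-.
Qed.

Lemma linD T : lin T -> forall x y, T (x + y) = T x + T y.
Proof. by move=> h x y; have := h 1 x y; rewrite !scale1r; apply. Qed.

Lemma linZ T : lin T -> forall c x, T (c *: x) = c *: T x.
Proof. by move=> h c x; have := h c x 0; rewrite (lin0 _ h) !addr0; apply. Qed.

Lemma linN T : lin T -> forall x, T (- x) = - T x.
Proof. by move=> h x; rewrite -scaleN1r linZ // scaleN1r. Qed.

Lemma linB T : lin T -> forall x y, T (x - y) = T x - T y.
Proof. by move=> h x y; rewrite linD // linN. Qed.

Lemma lin_sum T : lin T -> forall (I : Type) (s : seq I) (P : pred I) (G : I -> V),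
  T (\sum_(i <- s | P i) G i) = \sum_(i <- s | P i) T (G i).
Proof.
move=> h I s P G; elim: s => [|a s IH]; first by rewrite !big_nil lin0.
by rewrite !big_cons; case: (P a); rewrite ?linD ?IH.
Qed.

Lemma lin_linear (A : {linear V -> V}) : lin A.
Proof. by move=> c x y; rewrite linearP. Qed.

Lemma lin_iter A k : lin A -> lin (iter k A).
Proof. by move=> h; elim: k => [|k IH] c x y //=; rewrite IH h. Qed.

Lemma iter_comm T A B k x : (forall v, T (A v) = B (T v)) ->
  T (iter k A x) = iter k B (T x).
Proof. by move=> h; elim: k => [|k IH] //=; rewrite h IH. Qed.

Lemma poly_opE_N q A v N : (size q <= N)%N ->
  poly_op q A v = \sum_(i < N) q`_i *: iter i A v.
Proof.
move=> hN; rewrite /poly_op (big_ord_widen N (fun i => q`_i *: iter i A v)) //.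
rewrite big_mkcond; apply: eq_bigr => i _; case: ltnP => // h.
by rewrite nth_default // scale0r.
Qed.

Lemma poly_opD p q A v : poly_op (p + q) A v = poly_op p A v + poly_op q A v.
Proof.
set N := maxn (size p) (size q).
have hs: (size (p + q)%R <= N)%N by apply: size_polyD.
rewrite !(poly_opE_N _ _ _ N) ?leq_maxl ?leq_maxr // -big_split /=.
by apply: eq_bigr => i _; rewrite coefD scalerDl.
Qed.

Lemma poly_opZ c p A v : poly_op (c *: p) A v = c *: poly_op p A v.
Proof.
rewrite (poly_opE_N _ _ _ (size p)); last exact: size_scale_leq.
rewrite /poly_op scaler_sumr.
by apply: eq_bigr => i _; rewrite coefZ scalerA.
Qed.

Lemma poly_op0 A v : poly_op 0 A v = 0.
Proof. by rewrite /poly_op size_poly0 big_ord0. Qed.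

Lemma poly_opN p A v : poly_op (- p) A v = - poly_op p A v.
Proof. have ->: - p = (-1) *: p by rewrite scaleN1r.
by rewrite poly_opZ scaleN1r. Qed.

Lemma poly_opB p q A v : poly_op (p - q) A v = poly_op p A v - poly_op q A v.
Proof. by rewrite poly_opD poly_opN. Qed.

Lemma poly_opC c A v : poly_op c%:P A v = c *: v.
Proof.
rewrite (poly_opE_N _ _ _ 1) ?size_polyC ?leq_b1 //.
by rewrite big_ord1 coefC.
Qed.

Lemma poly_op1 A v : poly_op 1 A v = v.
Proof. by rewrite -polyC1 poly_opC scale1r. Qed.

Lemma poly_opMX q A v : poly_op (q * 'X) A v = poly_op q A (A v).
Proof.
rewrite (poly_opE_N _ _ _ (size q).+1); last first.
  by apply: leq_trans (size_polyMleq _ _) _; rewrite size_polyX addn2.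
rewrite big_ord_recl coefMX eqxx scale0r add0r /poly_op.
by apply: eq_bigr => i _; rewrite coefMX /= add0n -iterS iterSr.
Qed.

Lemma poly_opX A v : poly_op 'X A v = A v.
Proof. by rewrite -['X]mul1r poly_opMX poly_op1. Qed.

Lemma poly_op_comm T A B q v : lin T -> (forall x, T (A x) = B (T x)) ->
  T (poly_op q A v) = poly_op q B (T v).
Proof.
move=> hT hc; rewrite /poly_op lin_sum //; apply: eq_bigr => i _.
by rewrite linZ // (iter_comm _ _ _ _ _ hc).
Qed.

Lemma lin_poly_op q A : lin A -> lin (poly_op q A).
Proof.
move=> hA c x y; rewrite /poly_op scaler_sumr -big_split /=.
by apply: eq_bigr => i _; rewrite lin_iter // scalerDr !scalerA mulrC.
Qed.

Lemma poly_opM p q A v : lin A -> poly_op (p * q) A v = poly_op p A (poly_op q A v).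
Proof.
move=> hA; elim/poly_ind: p q v => [|p c IH] q v; first by rewrite mul0r !poly_op0.
rewrite mulrDl -mulrA -(commr_polyX q) poly_opD mul_polyC poly_opZ.
rewrite IH poly_opMX poly_opD poly_opC poly_opMX; congr (_ + _).
by rewrite (@poly_op_comm A A A).
Qed.

Lemma poly_op_comp p r A v : lin A -> poly_op (p \Po r) A v = poly_op p (poly_op r A) v.
Proof.
move=> hA; elim/poly_ind: p v => [|p c IH] v; first by rewrite comp_poly0 !poly_op0.
rewrite comp_poly_MXaddC poly_opD poly_opC poly_opM // IH.
by rewrite poly_opD poly_opC poly_opMX.
Qed.

Lemma poly_opXaddC c A v : poly_op ('X + c%:P) A v = A v + c *: v.
Proof. by rewrite poly_opD poly_opX poly_opC. Qed.


Section Span.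
Variable b : nat -> {poly CC} -> V.
Hypothesis hbD : forall k p q, b k (p + q) = b k p + b k q.
Hypothesis hbZ : forall k c p, b k (c *: p) = c *: b k p.

Lemma hb0 k : b k 0 = 0.
Proof using hbD hbZ. by have := hbZ k 0 0; rewrite !scale0r. Qed.

Definition Sum m (Q : nat -> {poly CC}) := \sum_(k < m) b k (Q k).
Definition inS m x := exists Q, x = Sum m Q.

Lemma Sum_recr m Q : Sum m.+1 Q = Sum m Q + b m (Q m).
Proof using hbD hbZ. by rewrite /Sum big_ord_recr. Qed.

Lemma inS0 m : inS m 0.
Proof using hbD hbZ. by exists (fun _ => 0); rewrite /Sum big1 // => i _; rewrite hb0. Qed.

Lemma inSD m x y : inS m x -> inS m y -> inS m (x + y).
Proof using hbD hbZ.
move=> [q1 ->] [q2 ->]; exists (fun k => q1 k + q2 k).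
by rewrite /Sum -big_split /=; apply: eq_bigr => i _; rewrite hbD.
Qed.

Lemma inSZ m c x : inS m x -> inS m (c *: x).
Proof using hbD hbZ.
move=> [q ->]; exists (fun k => c *: q k).
by rewrite /Sum scaler_sumr; apply: eq_bigr => i _; rewrite hbZ.
Qed.

Lemma inSN m x : inS m x -> inS m (- x).
Proof using hbD hbZ. by move=> h; rewrite -scaleN1r; apply: inSZ. Qed.

Lemma inSB m x y : inS m x -> inS m y -> inS m (x - y).
Proof using hbD hbZ. by move=> hx hy; apply: inSD => //; apply: inSN. Qed.

Lemma inS_widen m m' x : (m <= m')%N -> inS m x -> inS m' x.
Proof using hbD hbZ.
move=> hm [q ->]; exists (fun k => if (k < m)%N then q k else 0).
rewrite /Sum (big_ord_widen m' (fun k => b k (q k))) // big_mkcond.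
by apply: eq_bigr => i _; case: ifP => // _; rewrite hb0.
Qed.

Lemma inS_single m k g : (k < m)%N -> inS m (b k g).
Proof using hbD hbZ.
move=> hk; apply: (@inS_widen k.+1) => //.
exists (fun j => if j == k then g else 0); rewrite Sum_recr eqxx.
rewrite /Sum big1 ?add0r // => i _; by rewrite (ltn_eqF (ltn_ord i)) hb0.
Qed.

Lemma inS_big (I : Type) (s : seq I) (P : pred I) (G : I -> V) m :
  (forall i, P i -> inS m (G i)) -> inS m (\sum_(i <- s | P i) G i).
Proof using hbD hbZ. by move=> h; apply: big_ind => //; [apply: inS0 | apply: inSD]. Qed.

End Span.

Lemma inS_map (b b' : nat -> {poly CC} -> V) T m m' x :
  (forall k p q, b' k (p + q) = b' k p + b' k q) ->
  (forall k c p, b' k (c *: p) = c *: b' k p) ->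
  lin T -> (forall k g, (k < m)%N -> inS b' m' (T (b k g))) ->
  inS b m x -> inS b' m' (T x).
Proof.
move=> hD hZ hT h [q ->]; rewrite /Sum lin_sum //.
by apply: inS_big => // i _; apply: h.
Qed.

Lemma bound_exists (h : nat -> nat) n : exists d, forall k, (k < n)%N -> (h k <= d)%N.
Proof.
elim: n => [|n [d hd]]; first by exists 0%N.
exists (maxn d (h n)) => k; rewrite ltnS leq_eqVlt => /orP[/eqP ->|hk].
  exact: leq_maxr.
exact: leq_trans (hd k hk) (leq_maxl _ _).
Qed.

Lemma bound_seq (s : seq (nat * nat)) : exists N, forall x : nat * nat, x \in s -> (x.2 < N)%N.
Proof.
elim: s => [|a s [N hN]]; first by exists 0%N.
exists (maxn N a.2.+1) => x; rewrite inE => /orP[/eqP ->|hx].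
  exact: leq_maxr.
exact: leq_trans (hN x hx) (leq_maxl _ _).
Qed.


Lemma subr_eqE (a b c : V) : a - b = c -> b = a - c.
Proof. by move=> <-; rewrite opprB addrC subrK. Qed.
Lemma subr_eqN (a b c : V) : a - b = - c -> b = a + c.
Proof. by move=> h; rewrite -(opprK c) -h opprB addrC subrK. Qed.
Lemma subr_eqA (a b c : V) : a - b = c -> a = b + c.
Proof. by move=> <-; rewrite addrC subrK. Qed.

Section Spec.
Variables (f u : {poly CC}) (E F H : {linear V -> V}) (eta : CC) (w : V).
Hypothesis hR : is_Rf_module f E F H.
Hypothesis hf : f = 2%:R^-1 *: (u \Po ('X + 1) - u).
Hypothesis heta : eta != 0.
Hypothesis hW : whittaker_module E F H eta w.

Local Notation Hp g := (poly_op g H).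
Local Notation Om := (Omega_op u E F H).
Local Notation u1 := (u \Po ('X + 1)).

Let lE := lin_linear E.
Let lF := lin_linear F.
Let lH := lin_linear H.

Lemma EH x : E (H x) = H (E x) - E x.
Proof. by case: hR => _ h _; apply: subr_eqE; exact: h. Qed.
Lemma FH x : F (H x) = H (F x) + F x.
Proof. by case: hR => _ _ h; apply: subr_eqN; exact: h. Qed.
Lemma EF x : E (F x) = F (E x) + Hp f x.
Proof. by case: hR => h _ _; apply: subr_eqA; exact: h. Qed.
Lemma Ew : E w = eta *: w.
Proof. by case: hW. Qed.

Lemma E_Hp g x : E (Hp g x) = Hp (g \Po ('X - 1%:P)) (E x).
Proof.
rewrite (poly_op_comp _ _ _ _ lH) (poly_op_comm E H (poly_op ('X - 1%:P) H) _ _ lE) // => y.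
by rewrite EH -polyCN poly_opXaddC scaleN1r.
Qed.

Lemma F_Hp g x : F (Hp g x) = Hp (g \Po ('X + 1)) (F x).
Proof.
rewrite (poly_op_comp _ _ _ _ lH) (poly_op_comm F H (poly_op ('X + 1) H) _ _ lF) // => y.
by rewrite FH -polyC1 poly_opXaddC scale1r.
Qed.

Lemma H_Hp g x : H (Hp g x) = Hp g (H x).
Proof. exact: poly_op_comm. Qed.

Lemma lin_Om : lin Om.
Proof.
move=> c x y; rewrite /Omega_op lE lF (lin_poly_op _ _ lH) !scalerDr !scalerA.
by rewrite (mulrC c) addrACA.
Qed.

Lemma two_neq0 : (2%:R : CC) != 0.
Proof. by rewrite pnatr_eq0. Qed.

Lemma Om_H x : Om (H x) = H (Om x).
Proof.
rewrite /Omega_op EH (linB _ lF) FH addrK -H_Hp (linD _ lH) (linZ _ lH) //.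
Qed.

Lemma Om_E x : Om (E x) = E (Om x).
Proof.
rewrite /Omega_op (linD _ lE) (linZ _ lE) EF scalerDr E_Hp -addrA -poly_opZ -poly_opD.
congr (_ + poly_op _ _ _).
rewrite hf scalerA mulfV ?two_neq0 // scale1r -comp_polyA.
have ->: ('X + 1) \Po ('X - 1%:P) = 'X :> {poly CC}.
  by rewrite comp_polyD comp_polyX -polyC1 comp_polyC subrK.
by rewrite comp_polyXr subrK.
Qed.

Lemma Om_F x : Om (F x) = F (Om x).
Proof.
rewrite /Omega_op (linD _ lF) (linZ _ lF) EF (linD _ lF) scalerDr F_Hp -addrA -poly_opZ -poly_opD.
rewrite F_Hp; congr (_ + poly_op _ _ _).
rewrite hf comp_polyZ scalerA mulfV ?two_neq0 // scale1r comp_polyB.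
by rewrite subrK.
Qed.

Lemma Om_Hp g y : Om (Hp g y) = Hp g (Om y).
Proof. exact: (poly_op_comm _ _ _ _ _ lin_Om Om_H). Qed.

Lemma E_Omr r y : E (poly_op r Om y) = poly_op r Om (E y).
Proof. by apply: poly_op_comm => // x; rewrite Om_E. Qed.
Lemma F_Omr r y : F (poly_op r Om y) = poly_op r Om (F y).
Proof. by apply: poly_op_comm => // x; rewrite Om_F. Qed.
Lemma H_Omr r y : H (poly_op r Om y) = poly_op r Om (H y).
Proof. by apply: poly_op_comm => // x; rewrite Om_H. Qed.

Lemma annih r : poly_op r Om w = 0 -> in_ZV u E F H r.
Proof.
move=> h0; have lr := lin_poly_op r _ lin_Om.
case: hW => _ hc; move=> v; move: v.
apply: (hc (fun v => poly_op r Om v = 0)) => //.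
- exact: lin0.
- by move=> x y hx hy; rewrite (linD _ lr) hx hy addr0.
- by move=> c x hx; rewrite (linZ _ lr) hx scaler0.
- by move=> x hx; rewrite -E_Omr hx lin0.
- by move=> x hx; rewrite -F_Omr hx lin0.
- by move=> x hx; rewrite -H_Omr hx lin0.
Qed.

Definition c2 := (2%:R * eta)^-1.

Lemma c2_neq0 : c2 != 0.
Proof. by rewrite invr_eq0 mulf_neq0 ?two_neq0. Qed.

Lemma Om_w : Om w = (2%:R * eta) *: F w + Hp u1 w.
Proof. by rewrite /Omega_op Ew (linZ _ lF) scalerA. Qed.

Lemma Fw : F w = c2 *: (Om w - Hp u1 w).
Proof.
rewrite Om_w addrK scalerA /c2 mulVf ?scale1r //.
by rewrite mulf_neq0 ?two_neq0.
Qed.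

Lemma F_Hp_w g : F (Hp g w) =
  c2 *: (Om (Hp (g \Po ('X + 1)) w) - Hp ((g \Po ('X + 1)) * u1) w).
Proof.
rewrite F_Hp Fw (linZ _ (lin_poly_op _ _ lH)) (linB _ (lin_poly_op _ _ lH)).
by rewrite Om_Hp poly_opM.
Qed.

Definition bO k g := iter k Om (Hp g w).
Definition bF i g := iter i F (Hp g w).

Lemma bOD k p q : bO k (p + q) = bO k p + bO k q.
Proof. by rewrite /bO poly_opD (linD _ (lin_iter _ _ lin_Om)). Qed.
Lemma bOZ k c p : bO k (c *: p) = c *: bO k p.
Proof. by rewrite /bO poly_opZ (linZ _ (lin_iter _ _ lin_Om)). Qed.
Lemma bFD k p q : bF k (p + q) = bF k p + bF k q.
Proof. by rewrite /bF poly_opD (linD _ (lin_iter _ _ lF)). Qed.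
Lemma bFZ k c p : bF k (c *: p) = c *: bF k p.
Proof. by rewrite /bF poly_opZ (linZ _ (lin_iter _ _ lF)). Qed.

Local Notation inOS := (inS bO).
Local Notation inFS := (inS bF).

Lemma inOS_Om m x : inOS m x -> inOS m.+1 (Om x).
Proof.
move=> hx; apply: (@inS_map bO bO Om m m.+1 x bOD bOZ lin_Om _ hx).
by move=> k g hk; have := @inS_single bO bOD bOZ m.+1 k.+1 g hk; rewrite /bO.
Qed.

Lemma tri m g : exists2 Z, inOS m Z &
  iter m F (Hp g w) = c2 ^+ m *: iter m Om (Hp (g \Po ('X + m%:R%:P)) w) + Z.
Proof.
elim: m g => [|m IH] g.
  exists 0; first exact: (inS0 bO bOD bOZ).
  by rewrite addr0 /= expr0 scale1r addr0 comp_polyXr.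
set g1 := g \Po ('X + 1).
have [Z1 hZ1 e1] := IH g1.
have [Z2 hZ2 e2] := IH (g1 * u1).
exists (c2 *: Om Z1 - c2 *: (iter m F (Hp (g1 * u1) w))).
  apply: (inSB bO bOD bOZ).
    by apply: (inSZ bO bOD bOZ); apply: inOS_Om.
  apply: (inSZ bO bOD bOZ).
  rewrite e2; apply: (inSD bO bOD bOZ).
    by apply: (inSZ bO bOD bOZ); apply: (inS_single bO bOD bOZ).
  by apply: (inS_widen bO bOD bOZ _ _ _ (leqnSn m)).
rewrite iterSr F_Hp_w (linZ _ (lin_iter _ _ lF)) (linB _ (lin_iter _ _ lF)).
rewrite -(iter_comm _ _ _ _ _ Om_F) e1 (linD _ lin_Om) (linZ _ lin_Om) scalerBr scalerDr.
rewrite addrA; congr (_ + _ - _).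
rewrite scalerA -exprS /=; congr (_ *: Om (iter m Om (poly_op _ _ _))).
rewrite /g1 -comp_polyA comp_polyD comp_polyX -polyC1 comp_polyC -addrA -polyCD.
by rewrite -natr1 addrC.
Qed.

Lemma F_in_OS i g : inOS i.+1 (iter i F (Hp g w)).
Proof.
have [Z hZ ->] := tri i g.
apply: (inSD bO bOD bOZ); last exact: (inS_widen bO bOD bOZ _ _ _ (leqnSn i)).
by apply: (inSZ bO bOD bOZ); apply: (inS_single bO bOD bOZ).
Qed.

Lemma FS_in_OS m g : inOS m (Sum bF m g).
Proof.
apply: (inS_big bO bOD bOZ) => i _.
exact: (inS_widen bO bOD bOZ _ _ _ (ltn_ord i) (F_in_OS i (g i))).
Qed.

Definition Dop x := E x - eta *: x.

Lemma lin_Dop : lin Dop.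
Proof.
move=> c x y; rewrite /Dop lE scalerDr scalerBr !scalerA (mulrC c).
by rewrite opprD addrACA.
Qed.

Lemma bOB k p q : bO k (p - q) = bO k p - bO k q.
Proof.
have ->: p - q = p + (-1) *: q by rewrite scaleN1r.
by rewrite bOD bOZ scaleN1r.
Qed.

Lemma E_bO k g : E (bO k g) = eta *: bO k (g \Po ('X - 1%:P)).
Proof.
rewrite /bO (iter_comm _ _ Om _ _ (fun v => esym (Om_E v))) E_Hp Ew.
by rewrite (linZ _ (lin_poly_op _ _ lH)) (linZ _ (lin_iter _ _ lin_Om)).
Qed.

Lemma Dop_bO k g : Dop (bO k g) = eta *: bO k (Dl g).
Proof. by rewrite /Dop E_bO /Dl bOB scalerBr. Qed.

Lemma iterDop d m Q : iter d Dop (Sum bO m Q) = eta ^+ d *: Sum bO m (fun k => iter d Dl (Q k)).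
Proof.
elim: d => [|d IH]; first by rewrite expr0 scale1r.
rewrite /= IH (linZ _ lin_Dop) /Sum (lin_sum _ lin_Dop) exprSr -scalerA.
by congr (_ *: _); rewrite scaler_sumr; apply: eq_bigr => i _; rewrite Dop_bO.
Qed.

Lemma Sum_const n (a : nat -> CC) :
  Sum bO n (fun k => (a k)%:P) = poly_op (\poly_(k < n) a k) Om w.
Proof.
rewrite (poly_opE_N _ _ _ n) ?size_poly // /Sum.
apply: eq_bigr => k _; rewrite coef_poly ltn_ord /bO poly_opC.
by rewrite (linZ _ (lin_iter _ _ lin_Om)).
Qed.

Lemma OS_indep n : (forall r, in_ZV u E F H r -> (size r <= n)%N -> r = 0) ->
  forall Q, Sum bO n Q = 0 -> forall k, (k < n)%N -> Q k = 0.
Proof.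
move=> hZ Q h0.
have [d hd] := bound_exists (fun k => size (Q k)) n.
elim: d Q h0 hd => [|d IH] Q h0 hd k hk.
  by apply/eqP; rewrite -size_poly_eq0 -leqn0 hd.
apply: IH => // j hj.
have [cd cdn0 hcd] := iterDl d.
have e1 : Sum bO n (fun k => iter d Dl (Q k)) = 0.
  have := iterDop d n Q; rewrite h0 (lin0 _ (lin_iter _ _ lin_Dop)) => /esym/eqP.
  by rewrite scaler_eq0 expf_eq0 (negbTE heta) andbF /= => /eqP.
have e2 : poly_op (\poly_(k < n) (cd * (Q k)`_d)) Om w = 0.
  rewrite -Sum_const -e1 /Sum; apply: eq_bigr => i _.
  by rewrite hcd // hd.
have e3 := hZ _ (annih _ e2) (size_poly _ _).
apply: sizeleS; first exact: hd.
have := congr1 (fun p => p`_j) e3; rewrite coef_poly hj coef0 => /eqP.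
by rewrite mulf_eq0 (negbTE cdn0) => /eqP.
Qed.

Lemma bF0 k : bF k 0 = 0.
Proof. by have := bFZ k 0 0; rewrite !scale0r. Qed.

Lemma FS_indep m : (forall r, in_ZV u E F H r -> (size r <= m)%N -> r = 0) ->
  forall g, Sum bF m g = 0 -> forall i, (i < m)%N -> g i = 0.
Proof.
elim: m => [|m IH] hZ g h0 i hi //.
have [Z hZ2 e] := tri m (g m).
have [q0 eq0] : inOS m (Sum bF m g + Z) by apply: (inSD bO bOD bOZ) => //; apply: FS_in_OS.
pose q3 := fun k => if (k < m)%N then q0 k else c2 ^+ m *: (g m \Po ('X + m%:R%:P)).
have e3 : Sum bO m.+1 q3 = 0.
  rewrite (Sum_recr bO bOD bOZ).
  have -> : q3 m = c2 ^+ m *: (g m \Po ('X + m%:R%:P)) by rewrite /q3 ltnn.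
  have -> : Sum bO m q3 = Sum bO m q0 by apply: eq_bigr => k _; rewrite /q3 ltn_ord.
  rewrite bOZ.
  have eb : bF m (g m) = iter m F (Hp (g m) w) by [].
  rewrite -eq0 -h0 (Sum_recr bF bFD bFZ) eb e /bO -addrA (addrC Z) //.
have hm := OS_indep m.+1 hZ q3 e3 m (ltnSn m).
rewrite /q3 /= ltnn in hm.
have gm0 : g m = 0.
  move/eqP: hm; rewrite scaler_eq0 expf_eq0 (negbTE c2_neq0) andbF /=.
  by rewrite comp_poly2_eq0 ?size_XaddC // => /eqP.
move: hi; rewrite ltnS leq_eqVlt => /orP[/eqP ->//|hi].
apply: IH => //.
  by move=> r hr hs; apply: hZ => //; apply: leqW.
by move: h0; rewrite (Sum_recr bF bFD bFZ) gm0 bF0 addr0.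
Qed.

Lemma lin_id : lin id.
Proof. by []. Qed.

Lemma OS_gen_span v : exists m, inOS m v.
Proof.
case: hW => _ hc; move: v.
apply: (hc (fun v => exists m, inOS m v)).
- exists 1%N; have := inS_single bO bOD bOZ 1 0 1 (ltn0Sn 0).
  by rewrite /bO /= poly_op1.
- by exists 0%N; apply: (inS0 bO bOD bOZ).
- move=> x y [m1 h1] [m2 h2]; exists (maxn m1 m2); apply: (inSD bO bOD bOZ).
    exact: (inS_widen bO bOD bOZ _ _ _ (leq_maxl m1 m2)).
  exact: (inS_widen bO bOD bOZ _ _ _ (leq_maxr m1 m2)).
- by move=> c x [m hx]; exists m; apply: (inSZ bO bOD bOZ).
- move=> x [m hx]; exists m; apply: (inS_map bO bO E m m x bOD bOZ lE _ hx).
  move=> k g hk; rewrite E_bO; apply: (inSZ bO bOD bOZ).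
  exact: (inS_single bO bOD bOZ).
- move=> x [m hx]; exists m.+1; apply: (inS_map bO bO F m m.+1 x bOD bOZ lF _ hx).
  move=> k g hk; rewrite /bO (iter_comm _ _ _ _ _ (fun v => esym (Om_F v))) F_Hp_w.
  rewrite (linZ _ (lin_iter _ _ lin_Om)) (linB _ (lin_iter _ _ lin_Om)).
  apply: (inSZ bO bOD bOZ); apply: (inSB bO bOD bOZ).
    by have := inS_single bO bOD bOZ m.+1 k.+1 (g \Po ('X + 1)) hk; rewrite /bO iterSr.
  by apply: (inS_single bO bOD bOZ); apply: leqW.
- move=> x [m hx]; exists m; apply: (inS_map bO bO H m m x bOD bOZ lH _ hx).
  move=> k g hk; rewrite /bO (iter_comm _ _ _ _ _ (fun v => esym (Om_H v))) H_Hp -poly_opMX.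
  exact: (inS_single bO bOD bOZ).
Qed.

Lemma Om_in_FS k g : inFS k.+1 (bO k g).
Proof.
elim: k g => [|k IH] g.
  by have := inS_single bF bFD bFZ 1 0 g (ltn0Sn 0); rewrite /bF /bO.
have -> : bO k.+1 g = Om (bO k g) by [].
apply: (inS_map bF bF Om k.+1 k.+2 _ bFD bFZ lin_Om _ (IH g)).
move=> i h hi; rewrite /bF (iter_comm _ _ _ _ _ Om_F) Om_Hp Om_w.
rewrite (linD _ (lin_poly_op _ _ lH)) (linZ _ (lin_poly_op _ _ lH)) -poly_opM //.
rewrite (linD _ (lin_iter _ _ lF)) (linZ _ (lin_iter _ _ lF)).
apply: (inSD bF bFD bFZ); last by apply: (inS_single bF bFD bFZ); apply: leqW.
apply: (inSZ bF bFD bFZ).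
have -> : Hp h (F w) = F (Hp (h \Po ('X - 1%:P)) w).
  rewrite F_Hp -comp_polyA.
  have -> : ('X - 1%:P) \Po ('X + 1) = 'X :> {poly CC}.
    by rewrite comp_polyB comp_polyX comp_polyC polyC1 addrK.
  by rewrite comp_polyXr.
by have := inS_single bF bFD bFZ k.+2 i.+1 (h \Po ('X - 1%:P)) hi; rewrite /bF iterSr.
Qed.

Lemma span_OS_n p n : p \is monic -> size p = n.+1 -> in_ZV u E F H p ->
  forall v, inOS n v.
Proof.
move=> pm sp hp.
have step1 : forall g, inOS n (bO n g).
  move=> g; have := hp (Hp g w); rewrite (poly_opE_N _ _ _ n.+1) ?sp // big_ord_recr /=.
  move/monicP: pm; rewrite /lead_coef sp /= => -> /eqP; rewrite /bO scale1r addrC addr_eq0 => /eqP ->.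
  apply: (inSN bO bOD bOZ); apply: (inS_big bO bOD bOZ) => i _.
  apply: (inSZ bO bOD bOZ).
  by have := inS_single bO bOD bOZ n i g (ltn_ord i); rewrite /bO.
have step2 : forall x, inOS n x -> inOS n (Om x).
  move=> x hx; apply: (inS_map bO bO Om n n x bOD bOZ lin_Om _ hx).
  move=> k g hk; have -> : Om (bO k g) = bO k.+1 g by [].
  move: hk; rewrite leq_eqVlt => /orP[/eqP hkn|hk]; first by rewrite hkn; exact: step1.
  exact: (inS_single bO bOD bOZ).
have step3 : forall k g, inOS n (bO k g).
  elim=> [|k IH] g.
    case: n {step1 step2 sp} (step1 g) => [//|n] _.
    exact: (inS_single bO bOD bOZ).
  exact: step2 (IH g).
move=> v; have [m hv] := OS_gen_span v.
by apply: (inS_map bO bO id m n v bOD bOZ lin_id _ hv) => k g _; apply: step3.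
Qed.

Local Notation bb x := (iter x.1 F (iter x.2 H w)).
Definition grid m N := [seq (i, j) | i <- iota 0 m, j <- iota 0 N].

Lemma Sum_grid m N (g : nat -> {poly CC}) (a : nat * nat -> CC) :
  (forall i, (i < m)%N -> (size (g i) <= N)%N) ->
  (forall i j, (i < m)%N -> (j < N)%N -> (g i)`_j = a (i, j)) ->
  Sum bF m g = \sum_(x <- grid m N) a x *: bb x.
Proof.
move=> hs ha; rewrite big_allpairs /Sum -(big_mkord xpredT (fun k => bF k (g k))).
rewrite /index_iota subn0.
apply: eq_big_seq => i; rewrite mem_iota add0n /= => hi.
rewrite /bF (poly_opE_N _ _ _ N) ?hs // (lin_sum _ (lin_iter _ _ lF)).
rewrite -(big_mkord xpredT (fun j => iter i F ((g i)`_j *: iter j H w))).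
rewrite /index_iota subn0; apply: eq_big_seq => j.
rewrite mem_iota add0n /= => hj.
by rewrite (linZ _ (lin_iter _ _ lF)) ha.
Qed.

Lemma conv_span (m : nat) (g : nat -> {poly CC}) : exists s (c : nat * nat -> CC),
  (forall x : nat * nat, x \in s -> (x.1 < m)%N) /\ Sum bF m g = \sum_(x <- s) c x *: bb x.
Proof.
have [N hN] := bound_exists (fun i => size (g i)) m.
exists (grid m N), (fun x : nat * nat => (g x.1)`_x.2); split; last exact: Sum_grid.
move=> x /allpairsP [[i j] [hi hj ->]] /=.
by move: hi; rewrite mem_iota add0n.
Qed.

Lemma conv_indep (s : seq (nat * nat)) (c : nat * nat -> CC) m : uniq s ->
  (forall x : nat * nat, x \in s -> (x.1 < m)%N) -> exists g,
  Sum bF m g = \sum_(x <- s) c x *: bb x /\ forall x : nat * nat, x \in s -> c x = (g x.1)`_x.2.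
Proof.
move=> us hs; have [N hN] := bound_seq s.
exists (fun i => \poly_(j < N) (if (i, j) \in s then c (i, j) else 0)); split.
  rewrite (Sum_grid m N _ (fun x : nat * nat => if x \in s then c x else 0)); first last.
  - by move=> i j _ hj; rewrite coef_poly hj.
  - by move=> i _; apply: size_poly.
  rewrite (eq_bigr (fun x : nat * nat => if x \in s then c x *: bb x else 0)); last first.
    by move=> x _; case: ifP => _ //; rewrite scale0r.
  rewrite -big_mkcond -big_filter; apply: perm_big; apply: uniq_perm.
  - apply: filter_uniq; apply: allpairs_uniq; try exact: iota_uniq.
    by move=> [? ?] [? ?] _ _.
  - exact: us.
  move=> x; rewrite mem_filter; apply/andP/idP => [[]//|hx]; split => //.
  case: x hx => i j hx; apply: allpairs_f; rewrite mem_iota add0n /=.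
    exact: (hs (i, j) hx).
  exact: (hN (i, j) hx).
move=> [i j] hx /=; rewrite coef_poly (hN (i, j) hx) hx //.
Qed.

Lemma bound_seq1 (s : seq (nat * nat)) : exists N, forall x : nat * nat, x \in s -> (x.1 < N)%N.
Proof.
elim: s => [|a s [N hN]]; first by exists 0%N.
exists (maxn N a.1.+1) => x; rewrite inE => /orP[/eqP ->|hx].
  exact: leq_maxr.
exact: leq_trans (hN x hx) (leq_maxl _ _).
Qed.

Lemma main_spec :
  (forall (p : {poly CC}) (n : nat),
      p \is monic -> size p = n.+1 ->
      (forall q, in_ZV u E F H q <-> p %| q) ->
      is_basis_on (fun ij : nat * nat => (ij.1 < n)%N)
        (fun ij : nat * nat => iter ij.1 F (iter ij.2 H w))) /\
  ((forall q, in_ZV u E F H q -> q = 0) ->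
      is_basis_on (fun _ : nat * nat => true)
        (fun ij : nat * nat => iter ij.1 F (iter ij.2 H w))).
Proof.
split.
  move=> p n pm sp hp; split.
    move=> s c us /allP hs h0 x hx.
    have [g [eg hc]] := conv_indep s c n us hs.
    rewrite hc //.
    have hZ : forall r, in_ZV u E F H r -> (size r <= n)%N -> r = 0.
      move=> r /hp hpr hsr; apply/eqP; apply: contraT => rn0.
      by have := dvdp_leq rn0 hpr; rewrite sp => /leq_trans/(_ hsr); rewrite ltnn.
    by rewrite (FS_indep n hZ g) ?coef0 // ?eg ?h0 //; apply: hs.
  move=> v.
  have hpz : in_ZV u E F H p by apply/hp.
  have [Q eQ] : inS bO n v by exact: (span_OS_n p n pm sp hpz v).
  have [g eg] : inFS n v.
    apply: (inS_map bO bF id n n v bFD bFZ lin_id _ (ex_intro _ Q eQ)).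
    move=> k g hk; exact: (inS_widen bF bFD bFZ _ _ _ hk (Om_in_FS k g)).
  have [s [c [hs e]]] := conv_span n g.
  by exists s, c; split; [apply/allP | rewrite eg].
move=> hZ0; split.
  move=> s c us _ h0 x hx.
  have [m hm] := bound_seq1 s.
  have [g [eg hc]] := conv_indep s c m us hm.
  rewrite hc // (FS_indep m _ g) ?coef0 // ?eg ?h0 //; last exact: hm.
  by move=> r hr _; apply: hZ0.
move=> v; have [m hv] := OS_gen_span v.
have [g eg] : inFS m v.
  apply: (inS_map bO bF id m m v bFD bFZ lin_id _ hv).
  move=> k g hk; exact: (inS_widen bF bFD bFZ _ _ _ hk (Om_in_FS k g)).
have [s [c [hs e]]] := conv_span m g.
by exists s, c; split; [apply/allP => x | rewrite eg].
Qed.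

End Spec.
End Gen.

Theorem mainTheorem14 (f u : {poly CC}) (V : lmodType CC)
    (E F H : {linear V -> V}) (eta : CC) (w : V) :
  is_Rf_module f E F H ->
  f = 2%:R^-1 *: (u \Po ('X + 1) - u) ->
  eta != 0 ->
  whittaker_module E F H eta w ->
  (forall (p : {poly CC}) (n : nat),
      p \is monic -> size p = n.+1 ->
      (forall q, in_ZV u E F H q <-> p %| q) ->
      is_basis_on (fun ij : nat * nat => (ij.1 < n)%N)
        (fun ij : nat * nat => iter ij.1 F (iter ij.2 H w))) /\
  ((forall q, in_ZV u E F H q -> q = 0) ->
      is_basis_on (fun _ : nat * nat => true)
        (fun ij : nat * nat => iter ij.1 F (iter ij.2 H w))).
Proof.
move=> hR hf heta hW.
exact: (main_spec _ _ _ _ _ _ _ _ hR hf heta hW).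
Qed.
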